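(* Let $Z$ be a topological space and let $f\colon Z\to\mathbb{R}$ be a function (not assumed continuous). Define \[ \Gamma_f^{<}=\{(z,\alpha)\in Z\times\mathbb{R} \mid f(z)<\alpha\}, \] equipped with the subspace topology from $Z\times\mathbb{R}$. If there exists a continuous function $g\colon Z\to\mathbb{R}$ with $f(z)\le g(z)$ for all $z\in Z$, then $\Gamma_f^{<}$ is homotopy equivalent to $Z$. *)

(* Defs.v *)
From HB Require Import structures.
From mathcomp Require Import all_boot all_order all_algebra.
From mathcomp Require Import all_classical all_reals all_analysis.
Set Implicit Arguments. Unset Strict Implicit. Unset Printing Implicit Defensive.
Import Order.TTheory GRing.Theory Num.Theory.
Import numFieldNormedType.Exports.
Local Open Scope classical_set_scope.
Local Open Scope ring_scope.

Definition homotopic (R : realType) {X Y : topologicalType} (p q : X -> Y) : Prop :=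
  exists H : X * set_type (`[0, 1] : set R) -> Y,
    continuous H /\
    (forall x (t : set_type (`[0, 1] : set R)), set_val t = 0 -> H (x, t) = p x) /\
    (forall x (t : set_type (`[0, 1] : set R)), set_val t = 1 -> H (x, t) = q x).

Definition homotopy_equivalent (R : realType) (X Y : topologicalType) : Prop :=
  exists (p : X -> Y) (q : Y -> X),
    continuous p /\ continuous q /\
    homotopic R (q \o p) idfun /\ homotopic R (p \o q) idfun.

Definition Gamma_lt (R : realType) (Z : topologicalType) (f : Z -> R) : set (Z * R) :=
  [set za | f za.1 < za.2].

(* Main.v *)
Require Import Defs.
From HB Require Import structures.
From mathcomp Require Import all_boot all_order all_algebra.
From mathcomp Require Import lra.
From mathcomp Require Import all_classical all_reals all_analysis.
Import Order.TTheory GRing.Theory Num.Theory.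
Import numFieldNormedType.Exports.
Local Open Scope classical_set_scope.
Local Open Scope ring_scope.

Lemma pair_cont {T U V : topologicalType} (a : T -> U) (b : T -> V) :
  continuous a -> continuous b -> continuous (fun x => (a x, b x)).
Proof. by move=> ca cb x; apply: cvg_pair; [exact: ca|exact: cb]. Qed.

Section Aux.
Variables (R : realType) (Z : topologicalType) (f g : Z -> R).
Hypothesis gc : continuous g.
Hypothesis fg : forall z, f z <= g z.

Let G := set_type (Gamma_lt f).
Let I := set_type (`[0, 1] : set R).

Definition hh (w : G) (t : I) : Z * R :=
  ((set_val w).1, (1 - set_val t) * (g (set_val w).1 + 1) + set_val t * (set_val w).2).

Lemma hh_mem w t : hh w t \in Gamma_lt f.
Proof.
apply/mem_set; rewrite /Gamma_lt /hh /=.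
case: w => [[z a] Hw]; case: t => [t Ht] /=.
have /= Hw' := set_mem Hw.
have := set_mem Ht; rewrite /= in_itv /= => /andP [t0 t1].
rewrite !set_valE /=.
have := fg z; move: Hw' => /= Hfa Hfg.
have h1 : 0 <= (1 - t) * (g z + 1 - f z) by apply: mulr_ge0; lra.
have [->|tp] := eqVneq t 0; first by lra.
have tp' : 0 < t by rewrite lt_neqAle eq_sym tp t0.
have h2 : 0 < t * (a - f z) by apply: mulr_gt0; [exact: tp'|idtac]; move: Hfa; rewrite subr_gt0.
nra.
Qed.

Definition HH (p : G * I) : G := exist _ (hh p.1 p.2) (hh_mem p.1 p.2).

Definition qq (z : Z) : G.
refine (exist _ (z, g z + 1) _).
by apply/mem_set; rewrite /Gamma_lt /=; have := fg z; lra.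
Defined.

Lemma sv_cont : continuous (set_val : G -> Z * R).
Proof. exact: initial_continuous. Qed.

Lemma svI_cont : continuous (set_val : I -> R).
Proof. exact: initial_continuous. Qed.

Lemma HH_cont : continuous HH.
Proof.
apply: continuous_comp_initial.
have c0 : continuous (fun p : G * I => set_val p.1).
  move=> x; apply: (@continuous_comp _ _ _ (@fst G I) (set_val : G -> Z * R)); [exact: cvg_fst|exact: sv_cont].
have c1 : continuous (fun p : G * I => (set_val p.1).1).
  move=> x; apply: (@continuous_comp _ _ _ (fun p : G * I => set_val p.1) fst); [exact: c0|exact: cvg_fst].
have c2 : continuous (fun p : G * I => (set_val p.1).2).
  move=> x; apply: (@continuous_comp _ _ _ (fun p : G * I => set_val p.1) snd); [exact: c0|exact: cvg_snd].
have c3 : continuous (fun p : G * I => set_val p.2).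
  move=> x; apply: (@continuous_comp _ _ _ (@snd G I) (set_val : I -> R)); [exact: cvg_snd|exact: svI_cont].
have -> : set_val \o HH = fun p => ((set_val p.1).1,
   (1 - set_val p.2) * (g (set_val p.1).1 + 1) + set_val p.2 * (set_val p.1).2).
  by apply: funext => p.
apply: pair_cont; first exact: c1.
move=> x; apply: (@continuousD _ R^o _ (fun p : G * I => (1 - set_val p.2) * (g (set_val p.1).1 + 1))
   (fun p : G * I => set_val p.2 * (set_val p.1).2)).
- apply: (@continuousM _ _ (fun p : G * I => (1 - set_val p.2)) (fun p : G * I => (g (set_val p.1).1 + 1))).
  + apply: (@continuousB _ R^o _ (fun=> 1)); [exact: cvg_cst|exact: c3].
  + apply: (@continuousD _ R^o _ (fun p : G * I => g (set_val p.1).1) (fun=> 1)); last exact: cvg_cst.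
    by apply: (@continuous_comp _ _ _ (fun p : G * I => (set_val p.1).1) g); [exact: c1|exact: gc].
- by apply: (@continuousM _ _ (fun p : G * I => set_val p.2) (fun p : G * I => (set_val p.1).2)); [exact: c3|exact: c2].
Qed.

End Aux.

Theorem lemma3p1 (R : realType) (Z : topologicalType) (f : Z -> R) :
  (exists g : Z -> R, continuous g /\ (forall z, f z <= g z)) ->
  homotopy_equivalent R (set_type (Gamma_lt f)) Z.
Proof.
move=> [g [gc fg]].
exists (fun w => (set_val w).1), (@qq R Z f g fg); split.
  move=> x; apply: (@continuous_comp _ _ _ (set_val : set_type (Gamma_lt f) -> Z * R) fst); [exact: sv_cont|exact: cvg_fst].
split.
  apply: continuous_comp_initial.
  have -> : set_val \o (@qq R Z f g fg) = fun z => (z, g z + 1) by apply: funext.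
  apply: pair_cont; first by move=> x; exact: cvg_id.
  move=> x.
  by apply: (@continuousD _ R^o _ g (fun=> 1)); [exact: gc|exact: cvg_cst].
split.
  exists (@HH R Z f g fg); split; first exact: (@HH_cont R Z f g gc fg).
  split => -[[z a] Hw] [t Ht]; rewrite set_valE /= => Et; apply: val_inj.
  all: rewrite /= /HH /hh; rewrite !set_valE /=.
    by move: Et => ->; congr (_, _); rewrite subr0 mul1r mul0r addr0.
  by move: Et => ->; congr (_, _); rewrite subrr mul0r mul1r add0r.
exists (fun p => p.1); split; first by move=> [x t]; exact: cvg_fst.
by split => x t _.
Qed.
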